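(* Let $\mathfrak{A}$ be an abstract calculus with upward space $\mathrm{Up}(\mathfrak{A})=(\mathbf{S},\eqslantless)$. Then $\eqslantless$ is a connected partial order on $\mathbf S$. Moreover, taking $\mathfrak{B}\wedge\mathfrak{C}=\inf\{\mathfrak{B},\mathfrak{C}\}$ and $\mathfrak{B}\vee\mathfrak{C}=\sup\{\mathfrak{B},\mathfrak{C}\}$ with respect to $\eqslantless$, $(\mathbf{S},\wedge,\vee)$ is a complete lattice whose bottom element is $\mathfrak{A}$.
   Context: Fix a non-empty finite set $\mathtt{E}$ of edge types and a countably infinite set $\mathtt S$ of sequents (atomic labels). G-sequents are finite graphs with vertex set $\mathcal V$, edge relations $\mathcal E_a\subseteq\mathcal V\times\mathcal V$ for $a\in\mathtt E$, and vertex labels in $\mathtt S$; written $\Gamma\vdash\Delta$ with $\Gamma$ the set of edge atoms $w\mathcal E_a u$ and $\Delta$ the set of prefixed sequents $w:S$. Let $\overline{\mathtt E}=\{\bar a\mid a\in\mathtt E\}$, $\bar{\bar z}=z$, $\overline{x_1\cdots x_n}=\bar x_n\cdots\bar x_1$. An $\mathtt E$-system is a finite set $\mathbf G$ of production rules $x\longrightarrow t$ ($x\in\mathtt E\cup\overline{\mathtt E}$, $t$ a string over $\mathtt E\cup\overline{\mathtt E}$) with $x\longrightarrow t\in\mathbf G$ iff $\bar x\longrightarrow\bar t\in\mathbf G$; $\mathbf G(a)=\{t\mid a\longrightarrow^*_{\mathbf G}t\}$. Rules of an abstract calculus are of the kinds: initial rules $i(C,R)$ and reachability rules $r(\mathcal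 C,R)$, whose applicability is governed by constraints $C$ (resp. constraint families $\mathcal C$), i.e. trees whose edges are labelled by languages $\mathbf G'(a)$ ($a\in\mathtt E$, $\mathbf G'$ an $\mathtt E$-system) requiring $\mathbf G'(a)$-labelled paths in the g-sequent, and by sequent constraints $R$; local rules and expansion rules (no constraints); and Horn rules: for $a\in\mathtt E$ and a string $s=x_1\cdots x_n$, the forward Horn rule with premise $\Gamma,w\mathcal E_s u,w\mathcal E_a u\vdash\Delta$ and conclusion $\Gamma,w\mathcal E_s u\vdash\Delta$, and the backward Horn rule with $u\mathcal E_a w$ in place of $w\mathcal E_a u$ (here $w\mathcal E_s u$ abbreviates a chain $w\mathcal E_{x_1}v_1,\dots,v_{n-1}\mathcal E_{x_n}u$, $v\mathcal E_{\bar a}z$ meaning $z\mathcal E_a v$, $w\mathcal E_\varepsilon u$ meaning $w=u$). $\mathbf G(h_f)=\{a\longrightarrow s,\bar a\longrightarrow\bar s\}$, $\mathbf G(h_b)=\{\bar a\longrightarrow s,a\longrightarrow\bar s\}$; $\mathbf G(\mathrm H)$ is the union over a set $\mathrm H$ of Horn rules. Absorb: $C\oplus\mathbf G$ replaces every edge label $\mathbf G'(a)$ by $(\mathbf G'\cup\mathbf G)(a)$ (componentwise on families); $i(C,R)\oplus\mathbf G=i(C\oplus\mathbf G,R)$, $r(\mathcal C,R)\oplus\mathbf G=r(\mathcal C\oplus\mathbf G,R)$. An abstract calculus is $\mathfrak A=(\mathcal G^{\mathtt E},\mathfrak R)$ with $\mathcal G^{\mathtt E}$ the set of g-sequents over $\mathtt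 E$ and $\mathfrak R$ a finite set of such rules; $\mathrm H(\mathfrak A)$ is its set of Horn rules; $\mathfrak A\setminus\mathrm R$ removes rules; $\mathfrak A\oplus\mathbf G$ replaces each initial and reachability rule $\rho$ by $\rho\oplus\mathbf G$. Dependency graph of Horn rules: for a production rule $p=x\longrightarrow t$ let $\bar p=\bar x\longrightarrow\bar t$; each Horn rule $h$ has a production pair $(p,\bar p)$ formed by its grammar. For distinct pairs with $p=x\longrightarrow s$, $p'=y\longrightarrow t$, $(p,\bar p)\sqsubset(p',\bar p')$ iff $s$ or $\bar s$ contains $y$; $\sqsubseteq$ is its reflexive-transitive closure; $\mathsf{DG}(\mathrm H)=(\mathrm H,\sqsubseteq')$ where $h\sqsubseteq'h'$ iff the pair of $h$ is $\sqsubseteq$ the pair of $h'$. $V'$ is fracturable in $(V,\sqsubseteq)$ iff there are no $v\in V'$, $v'\in V\setminus V'$ with $v\sqsubseteq v'$; $V''$ is anti-fracturable iff $V''=V\setminus V'$ for a fracturable $V'$. Upward space $\mathrm{Up}(\mathfrak A)=(\mathbf S,\eqslantless)$, defined inductively: $\mathfrak A\in\mathbf S$; if $\mathfrak B\in\mathbf S$ and $\mathrm H'\subseteq\mathrm H(\mathfrak B)$ is anti-fracturable in $\mathsf{DG}(\mathrm H(\mathfrak B))$, then $\mathfrak C=(\mathfrak B\oplus\mathbf G(\mathrm H'))\setminus\mathrm H'\in\mathbf S$ and $\mathfrak B\eqslantless\mathfrak C$. *)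

(* Defs.v *)
From HB Require Import structures.
From mathcomp Require Import all_boot.
From mathcomp Require Import finmap.
From Stdlib Require Import Relations.

Set Implicit Arguments.
Unset Strict Implicit.
Unset Printing Implicit Defensive.

Local Open Scope fset_scope.

Section AbstractCalculi.

(* E : finite (nonemptiness is a hypothesis of the theorem) set of edge types.
   SC : sequent constraints R; LR, ER : local and expansion rules.  These are
   left abstract (the upward space does not inspect them). *)
Variables (E : finType) (SC LR ER : choiceType).

(* letters of E ∪ Ē : (a, false) = a,  (a, true) = ā *)
Definition letter := (E * bool)%type.
Definition lett (a : E) : letter := (a, false).
Definition bar (x : letter) : letter := (x.1, ~~ x.2).
Definition bars (s : seq letter) : seq letter := rev (map bar s).

Definition production := (letter * seq letter)%type.
Definition esystem := {fset production}.
Definition is_esystem (G : esystem) : Prop :=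
  forall x t, ((x, t) \in G) = ((bar x, bars t) \in G).

Inductive derives (G : esystem) : seq letter -> seq letter -> Prop :=
| der_refl u : derives G u u
| der_step u x v t w : (x, t) \in G -> derives G (u ++ t ++ v) w ->
    derives G (u ++ x :: v) w.
Definition lang (G : esystem) (a : E) : seq letter -> Prop := derives G [:: lett a].

(* an edge label of a constraint: the language G'(a), presented by (G', a) *)
Definition label := (esystem * E)%type.
Definition label_lang (l : label) := lang l.1 l.2.
(* a constraint: a tree given by its labelled edges (parent, child, label) *)
Definition constraint := seq (nat * nat * label).

Inductive rule :=
| RInit of constraint & SC
| RReach of seq constraint & SC
| RLocal of LR
| RExp of ER
| RHornF of E & seq letter
| RHornB of E & seq letter.

Definition rule_code :=
  ((constraint * SC) + ((seq constraint * SC) + (LR + (ER +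
    ((E * seq letter) + (E * seq letter))))))%type.

Definition rule_enc (r : rule) : rule_code :=
  match r with
  | RInit C R => inl (C, R)
  | RReach Cs R => inr (inl (Cs, R))
  | RLocal l => inr (inr (inl l))
  | RExp e => inr (inr (inr (inl e)))
  | RHornF a s => inr (inr (inr (inr (inl (a, s)))))
  | RHornB a s => inr (inr (inr (inr (inr (a, s)))))
  end.

Definition rule_dec (c : rule_code) : rule :=
  match c with
  | inl (C, R) => RInit C R
  | inr (inl (Cs, R)) => RReach Cs R
  | inr (inr (inl l)) => RLocal l
  | inr (inr (inr (inl e))) => RExp e
  | inr (inr (inr (inr (inl (a, s))))) => RHornF a s
  | inr (inr (inr (inr (inr (a, s))))) => RHornB a s
  end.

Lemma rule_encK : cancel rule_enc rule_dec.
Proof. by case. Qed.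

HB.instance Definition _ := Choice.copy rule (can_type rule_encK).

(* an abstract calculus (G^E, ℜ): G^E is fixed, so it is given by ℜ *)
Record calculus := Calculus { rules : {fset rule} }.

Definition constr_systems (C : constraint) : seq esystem := map (fun e => e.2.1) C.
Definition rule_systems (r : rule) : seq esystem :=
  match r with
  | RInit C _ => constr_systems C
  | RReach Cs _ => flatten (map constr_systems Cs)
  | _ => [::]
  end.
Definition calc_wf (A : calculus) : Prop :=
  forall r, r \in rules A -> forall G, G \in rule_systems r -> is_esystem G.

Definition absorb_label (G : esystem) (l : label) : label := (l.1 `|` G, l.2).
Definition absorb_constr (G : esystem) (C : constraint) : constraint :=
  map (fun e => (e.1, absorb_label G e.2)) C.
Definition absorb_rule (G : esystem) (r : rule) : rule :=
  match r with
  | RInit C R => RInit (absorb_constr G C) R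
  | RReach Cs R => RReach (map (absorb_constr G) Cs) R
  | _ => r
  end.
Definition oplus (B : calculus) (G : esystem) : calculus :=
  Calculus [fset absorb_rule G r | r in rules B].
Definition remove (B : calculus) (H : {fset rule}) : calculus :=
  Calculus (rules B `\` H).

Definition is_horn (r : rule) : bool :=
  match r with RHornF _ _ | RHornB _ _ => true | _ => false end.
Definition horns (B : calculus) : {fset rule} := [fset r in rules B | is_horn r].

Definition horn_gram (r : rule) : esystem :=
  match r with
  | RHornF a s => [fset (lett a, s); (bar (lett a), bars s)]
  | RHornB a s => [fset (bar (lett a), s); (lett a, bars s)]
  | _ => fset0
  end.
Definition gram_of (H : {fset rule}) : esystem :=
  \big[fsetU/fset0]_(h <- H) horn_gram h.

(* dependency graph DG(V) of a set V of Horn rules.  A production pair (p, p̄)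
   is represented by the set {p, p̄} = horn_gram h. *)
Definition pair_step (P Q : esystem) : Prop :=
  P != Q /\ exists p q, [/\ p \in P, q \in Q & (q.1 \in p.2) || (q.1 \in bars p.2)].
Definition pairs (V : {fset rule}) : {fset esystem} := [fset horn_gram h | h in V].
Definition pair_le (V : {fset rule}) : relation esystem :=
  clos_refl_trans esystem
    (fun P Q => [/\ P \in pairs V, Q \in pairs V & pair_step P Q]).
Definition dg_le (V : {fset rule}) (h h' : rule) : Prop :=
  pair_le V (horn_gram h) (horn_gram h').

Definition fracturable (V V' : {fset rule}) : Prop :=
  V' `<=` V /\
  ~ (exists v v', [/\ v \in V', v' \in V `\` V' & dg_le V v v']).
Definition anti_fracturable (V V'' : {fset rule}) : Prop :=
  exists V', fracturable V V' /\ V'' = V `\` V'.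

Definition upd (B : calculus) (H : {fset rule}) : calculus :=
  remove (oplus B (gram_of H)) H.

Inductive in_up (A : calculus) : calculus -> Prop :=
| up_base : in_up A A
| up_next B H : in_up A B -> anti_fracturable (horns B) H -> in_up A (upd B H).

Definition up_le (A : calculus) (B C : calculus) : Prop :=
  in_up A B /\ exists H, anti_fracturable (horns B) H /\ C = upd B H.

Definition is_lub (S : calculus -> Prop) (le : calculus -> calculus -> Prop)
    (X : calculus -> Prop) (s : calculus) : Prop :=
  S s /\ (forall x, X x -> le x s) /\
  (forall u, S u -> (forall x, X x -> le x u) -> le s u).
Definition is_glb (S : calculus -> Prop) (le : calculus -> calculus -> Prop)
    (X : calculus -> Prop) (i : calculus) : Prop :=
  S i /\ (forall x, X x -> le i x) /\
  (forall u, S u -> (forall x, X x -> le u x) -> le u i).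

End AbstractCalculi.

(* Main.v *)
Require Import Defs.
From mathcomp Require Import all_boot finmap.
From Stdlib Require Import Relations.
Local Open Scope fset_scope.
Section S.
Set Implicit Arguments. Unset Strict Implicit.
Variables (E : finType) (SC LR ER : choiceType).
Notation rule := (rule E SC LR ER).
Notation calculus := (calculus E SC LR ER).
Lemma gram_memP (s : seq rule) x :
  (x \in \big[fsetU/fset0]_(h <- s) horn_gram h) = has (fun h => x \in horn_gram h) s.
Proof. elim: s => [|h s IH]; first by rewrite big_nil inE.
by rewrite big_cons inE IH. Qed.
Lemma gram_ofU (H H' : {fset rule}) : gram_of (H `|` H') = gram_of H `|` gram_of H'.
Proof.
apply/fsetP => x; rewrite /gram_of inE !gram_memP.
apply/hasP/orP => [[h]|[]/hasP[h hin hx]].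
  rewrite inE => /orP[] hin hx; [left|right]; apply/hasP; by exists h.
by exists h => //; rewrite inE hin.
by exists h => //; rewrite inE hin orbT.
Qed.
Lemma gram_of0 : gram_of (fset0 : {fset rule}) = fset0.
Proof. by apply/fsetP => x; rewrite /gram_of gram_memP inE. Qed.
Lemma absorb_horn G (r : rule) : is_horn (absorb_rule G r) = is_horn r.
Proof. by case: r. Qed.
Lemma absorb_hornE G (r : rule) : is_horn r -> absorb_rule G r = r.
Proof. by case: r. Qed.
Lemma absorb0 (r : rule) : absorb_rule fset0 r = r.
Proof.
have hc : forall C : constraint E, absorb_constr fset0 C = C.
  move=> C; rewrite /absorb_constr /absorb_label.
  elim: C => [|[[p c] [g a]] C IH] //=; by rewrite fsetU0 IH.
case: r => //= [C R|Cs R]; first by rewrite hc.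
by rewrite (eq_map hc) map_id.
Qed.
Lemma absorbA G G' (r : rule) : absorb_rule G' (absorb_rule G r) = absorb_rule (G `|` G') r.
Proof.
have hc : forall C : constraint E, absorb_constr G' (absorb_constr G C) = absorb_constr (G `|` G') C.
  move=> C; rewrite /absorb_constr /absorb_label.
  elim: C => [|[[p c] [g a]] C IH] //=; by rewrite fsetUA IH.
case: r => //= [C R|Cs R]; first by rewrite hc.
by rewrite -map_comp (eq_map hc).
Qed.
Lemma hornsE (B : calculus) r : (r \in horns B) = (r \in rules B) && is_horn r.
Proof. by rewrite /horns !inE. Qed.
Lemma horns_upd (B : calculus) H : horns (upd B H) = horns B `\` H.
Proof.
apply/fsetP => r; rewrite inE !hornsE /upd /remove /oplus /= !inE.
case: (r \in H) => //=; apply/andP/andP => [[/imfsetP[r0 /= r0in ->] h]|[rin h]].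
  by rewrite absorb_horn in h; rewrite absorb_hornE.
by split => //; apply/imfsetP; exists r => //; rewrite absorb_hornE.
Qed.
Lemma upd0 (B : calculus) : upd B fset0 = B.
Proof.
case: B => R; rewrite /upd /remove /oplus /= gram_of0 fsetD0; congr Calculus.
apply/fsetP => r; apply/imfsetP/idP => [[r0 /= r0in ->]|rin]; first by rewrite absorb0.
by exists r => //; rewrite absorb0.
Qed.
Lemma upd_upd (B : calculus) H H' : {in H, forall h, is_horn h} ->
  upd (upd B H) H' = upd B (H `|` H').
Proof.
move=> Hh; rewrite /upd /remove /oplus /=; congr Calculus.
apply/fsetP => x; rewrite !inE gram_ofU.
case: (x \in H') => /=; rewrite ?orbT ?orbF //=.
apply/imfsetP/andP => [[y /=]|[xH /imfsetP[r /= rin xE]]]; last subst x.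
  rewrite !inE => /andP[yH /imfsetP[r /= rin yE]] ->; subst y; rewrite absorbA; split.
    case hr: (is_horn r); first by rewrite !absorb_hornE in yH *.
    by apply/negP => /Hh; rewrite absorb_horn hr.
  by apply/imfsetP; exists r.
exists (absorb_rule (gram_of H) r); last by rewrite absorbA.
rewrite !inE; apply/andP; split; last by apply/imfsetP; exists r.
case hr: (is_horn r); first by rewrite !absorb_hornE in xH *.
by apply/negP => /Hh; rewrite absorb_horn hr.
Qed.
Definition AF (V H : {fset rule}) := H `<=` V /\
  forall v v', v \in V -> v' \in H -> dg_le V v v' -> v \in H.
Lemma AFP V H : anti_fracturable V H <-> AF V H.
Proof.
split.
  move=> [V' [[sub nex] ->]]; split; first exact: fsubsetDl.
  move=> v v' vV; rewrite inE => /andP[v'nV' v'V] dg; rewrite inE vV andbT.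
  apply/negP => vV'; apply nex; exists v, v'; split => //; by rewrite inE v'nV' v'V.
move=> [sub cl]; exists (V `\` H); split; first split; first exact: fsubsetDl.
  move=> [v [v' [vin v'in dg]]]; rewrite !inE in vin v'in.
  case/andP: vin => vnH vV; case/andP: v'in => a v'V; rewrite v'V andbT negbK in a.
  by move: (cl v v' vV a dg); rewrite (negbTE vnH).
apply/fsetP => x; rewrite !inE; have := fsubsetP sub x.
by case: (x \in H); case: (x \in V) => //= ->.
Qed.
Lemma pairsP (V : {fset rule}) (P : esystem E) : reflect (exists2 h, h \in V & P = horn_gram h) (P \in pairs V).
Proof. exact: imfsetP. Qed.
Lemma pair_le_mono (W V : {fset rule}) (P Q : esystem E) : W `<=` V -> pair_le W P Q -> pair_le V P Q.
Proof.
move=> sub; rewrite /pair_le; induction 1.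
- destruct H as [a b c]; apply: rt_step; split => //.
  + by case/pairsP: a => h hin ->; apply/pairsP; exists h => //; exact: (fsubsetP sub).
  + by case/pairsP: b => h hin ->; apply/pairsP; exists h => //; exact: (fsubsetP sub).
- exact: rt_refl.
- exact: rt_trans IHclos_refl_trans1 IHclos_refl_trans2.
Qed.
Lemma dg_le_mono (W V : {fset rule}) (v u : rule) : W `<=` V -> dg_le W v u -> dg_le V v u.
Proof. exact: pair_le_mono. Qed.
Lemma dg_restrict (W V : {fset rule}) : W `<=` V ->
  (forall w u, w \in W -> u \in V -> dg_le V w u -> u \in W) ->
  forall w u, w \in W -> dg_le V w u -> dg_le W w u.
Proof.
move=> sub up w u wW; rewrite /dg_le /pair_le => /clos_rt_rt1n_iff hPQ.
remember (horn_gram w) as P eqn:eP; remember (horn_gram u) as Q eqn:eQ.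
clear eQ; elim: hPQ w wW eP => [x|x y z [a b c] _ IH] w wW eP; first exact: rt_refl.
case/pairsP: b => u' u'V ey.
have u'W : u' \in W.
  apply: (up w) => //; rewrite /dg_le /pair_le -eP -ey; apply: rt_step; split => //.
  by rewrite ey; apply/pairsP; exists u'.
apply: rt_trans (IH u' u'W ey); apply: rt_step; split => //.
  by rewrite eP; apply/pairsP; exists w.
by apply/pairsP; exists u'.
Qed.
Lemma AF0 V : AF V fset0.
Proof. by split; [exact: fsub0set| move=> v v' _; rewrite inE]. Qed.
Lemma AF_comp V H H' : AF V H -> AF (V `\` H) H' -> AF V (H `|` H').
Proof.
move=> [s1 c1] [s2 c2]; split.
  by rewrite fsubUset s1 /=; exact: (fsubset_trans s2 (fsubsetDl _ _)).
move=> v v' vV; rewrite inE => /orP[v'H|v'H'] dg; first by rewrite inE (c1 v v').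
case: (boolP (v \in H)) => vH; first by rewrite inE vH.
have vW : v \in V `\` H by rewrite inE vH vV.
have up : forall w u, w \in V `\` H -> u \in V -> dg_le V w u -> u \in V `\` H.
  move=> w u; rewrite !inE => /andP[wH wV] uV dg'; rewrite uV andbT.
  by apply/negP => uH; move: (c1 w u wV uH dg'); rewrite (negbTE wH).
have dg2 := dg_restrict (fsubsetDl V H) up vW dg.
by rewrite inE (c2 v v' vW v'H' dg2) orbT.
Qed.
Lemma AF_diff V H1 H2 : AF V H1 -> AF V H2 -> H1 `<=` H2 -> AF (V `\` H1) (H2 `\` H1).
Proof.
move=> [s1 c1] [s2 c2] s12; split.
  apply/fsubsetP => x; rewrite !inE => /andP[-> /(fsubsetP s2) ->] //.
move=> v v'; rewrite !inE => /andP[vH1 vV] /andP[_ v'H2] dg.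
by rewrite vH1 (c2 v v') //; apply: dg_le_mono dg; exact: fsubsetDl.
Qed.
Lemma AF_horn (A : calculus) H : AF (horns A) H -> {in H, forall h, is_horn h}.
Proof. by move=> [s _] h /(fsubsetP s); rewrite hornsE => /andP[]. Qed.
Lemma in_upP (A B : calculus) :
  in_up A B <-> exists H, AF (horns A) H /\ B = upd A H.
Proof.
split.
  elim => [|B' H' _ [H [afH ->]] /AFP afH'].
    by exists fset0; split; [exact: AF0 | rewrite upd0].
  exists (H `|` H'); split; last by rewrite upd_upd //; exact: AF_horn afH.
  by apply: AF_comp afH _; rewrite -horns_upd.
move=> [H [afH ->]]; apply: up_next; first exact: up_base.
exact/AFP.
Qed.
Lemma upd_inj (A : calculus) H1 H2 : AF (horns A) H1 -> AF (horns A) H2 ->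
  upd A H1 = upd A H2 -> H1 = H2.
Proof.
move=> [s1 _] [s2 _] /(congr1 (@horns _ _ _ _)); rewrite !horns_upd => /fsetP e.
apply/fsetP => x; have := e x; rewrite !in_fsetD => ex.
case a: (x \in H1); case b: (x \in H2) => //.
  by move: ex; rewrite a b (fsubsetP s1 x a).
by move: ex; rewrite a b (fsubsetP s2 x b).
Qed.
Lemma up_leP (A : calculus) H1 H2 : AF (horns A) H1 -> AF (horns A) H2 ->
  up_le A (upd A H1) (upd A H2) <-> H1 `<=` H2.
Proof.
move=> af1 af2; split.
  move=> [_ [H' [/AFP af' e]]].
  rewrite upd_upd in e; last exact: AF_horn af1.
  have af12 : AF (horns A) (H1 `|` H') by apply: AF_comp af1 _; rewrite -horns_upd.
  by rewrite (upd_inj af2 af12 e) fsubsetUl.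
move=> s12; split; first by apply/in_upP; exists H1.
exists (H2 `\` H1); split.
  by apply/AFP; rewrite horns_upd; exact: AF_diff.
rewrite upd_upd; last exact: AF_horn af1.
congr upd; apply/fsetP => x; rewrite !inE; have := fsubsetP s12 x.
by case: (x \in H1); case: (x \in H2) => //= ->.
Qed.
End S.
From Stdlib Require Import ClassicalDescription.
Definition pb (P : Prop) : bool := if excluded_middle_informative P then true else false.
Lemma pbP (P : Prop) : reflect P (pb P).
Proof. by rewrite /pb; case: excluded_middle_informative => h; constructor. Qed.

Lemma up_le_in (E : finType) (SC LR ER : choiceType) (A B C : calculus E SC LR ER) :
  up_le A B C -> in_up A B /\ in_up A C.
Proof. by move=> [iB [H [af ->]]]; split => //; apply: up_next. Qed.

Lemma sepE (K : choiceType) (A : {fset K}) (P : K -> bool) x :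
  (x \in [fset y in A | P y]) = (x \in A) && P x.
Proof. by rewrite !inE. Qed.
Lemma up_leI (E : finType) (SC LR ER : choiceType) (A : calculus E SC LR ER) H1 H2 :
  AF (horns A) H1 -> AF (horns A) H2 -> H1 `<=` H2 -> up_le A (upd A H1) (upd A H2).
Proof. by move=> a b; case: (up_leP a b). Qed.
Lemma up_leE (E : finType) (SC LR ER : choiceType) (A : calculus E SC LR ER) H1 H2 :
  AF (horns A) H1 -> AF (horns A) H2 -> up_le A (upd A H1) (upd A H2) -> H1 `<=` H2.
Proof. by move=> a b; case: (up_leP a b). Qed.

Local Close Scope fset_scope.
Theorem mainTheorem10 (E : finType) (SC LR ER : choiceType)
    (A : calculus E SC LR ER) :
  0 < #|E| -> calc_wf A ->
  (* ⩽ is a partial order on S *)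
  ((forall B, in_up A B -> up_le A B B) /\
   (forall B C, in_up A B -> in_up A C -> up_le A B C -> up_le A C B -> B = C) /\
   (forall B C D, up_le A B C -> up_le A C D -> up_le A B D)) /\
  (* ⩽ is connected on S *)
  (forall B C, in_up A B -> in_up A C ->
     clos_refl_sym_trans _ (up_le A) B C) /\
  (* (S, ∧, ∨) is a complete lattice: every subset of S has an inf and a sup *)
  (forall X : calculus E SC LR ER -> Prop, (forall B, X B -> in_up A B) ->
     (exists i, is_glb (in_up A) (up_le A) X i) /\
     (exists s, is_lub (in_up A) (up_le A) X s)) /\
  (* with bottom element 𝔄 *)
  (in_up A A /\ forall B, in_up A B -> up_le A A B).
Proof.
Local Open Scope fset_scope.
move=> _ _.
set V := horns A.
have bot : forall B, in_up A B -> up_le A A B.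
  move=> B /in_upP[H [af ->]].
  by have := up_leI (AF0 _) af (fsub0set _); rewrite upd0.
split; [split; [|split]|split; [|split]].
- move=> B /in_upP[H [af ->]]; exact: up_leI (fsubset_refl _).
- move=> B C /in_upP[H1 [af1 ->]] /in_upP[H2 [af2 ->]] /(up_leE af1 af2) s12
    /(up_leE af2 af1) s21.
  by congr upd; apply/eqP; rewrite eqEfsubset s12 s21.
- move=> B C D bc cd.
  case: (up_le_in bc) => /in_upP[H1 [af1 eB]] /in_upP[H2 [af2 eC]].
  case: (up_le_in cd) => _ /in_upP[H3 [af3 eD]].
  move: bc cd; rewrite eB eC eD => /(up_leE af1 af2) s12 /(up_leE af2 af3) s23.
  by apply: up_leI af1 af3 (fsubset_trans s12 s23).
- move=> B C iB iC.
  apply: rst_trans (rst_sym _ _ _ _ (rst_step _ _ _ _ (bot B iB))) (rst_step _ _ _ _ (bot C iC)).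
- move=> X XS; split.
  + pose I := [fset v in V | pb (forall H, AF V H -> X (upd A H) -> v \in H)].
    have afI : AF V I.
      split; first by apply/fsubsetP => v; rewrite sepE => /andP[].
      move=> v v' vV; rewrite sepE => /andP[_ /pbP h] dg; rewrite /I sepE vV /=.
      apply/pbP => H afH XH; case: afH => s c; exact: (c v v' vV (h H (conj s c) XH) dg).
    exists (upd A I); split; first by apply/in_upP; exists I.
    split.
      move=> x Xx; case/in_upP: (XS x Xx) => H [afH ex]; rewrite ex in Xx *.
      apply: up_leI => //; apply/fsubsetP => v; rewrite /I sepE => /andP[_ /pbP h].
      exact: h.
    move=> u /in_upP[K [afK ->]] lo; apply: up_leI => //; apply/fsubsetP => y yK.
    rewrite /I sepE (fsubsetP afK.1 y yK) /=; apply/pbP => H afH XH.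
    by have /(up_leE afK afH)/fsubsetP := lo _ XH; apply.
  + pose U := [fset v in V | pb (exists H, [/\ AF V H, X (upd A H) & v \in H])].
    have afU : AF V U.
      split; first by apply/fsubsetP => v; rewrite sepE => /andP[].
      move=> v v' vV; rewrite sepE => /andP[_ /pbP [H [afH XH v'H]]] dg; rewrite /U sepE vV /=.
      apply/pbP; exists H; split => //; case: afH => s c; exact: (c v v' vV v'H dg).
    exists (upd A U); split; first by apply/in_upP; exists U.
    split.
      move=> x Xx; case/in_upP: (XS x Xx) => H [afH ex]; rewrite ex in Xx *.
      apply: up_leI => //; apply/fsubsetP => v vH; rewrite /U sepE (fsubsetP afH.1 v vH) /=.
      by apply/pbP; exists H.
    move=> u /in_upP[K [afK ->]] up; apply: up_leI => //; apply/fsubsetP => y.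
    rewrite /U sepE => /andP[_ /pbP [H [afH XH yH]]].
    by have /(up_leE afH afK)/fsubsetP := up _ XH; apply.
- split; [exact: up_base | exact: bot].
Qed.
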